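(* Let $y(t)$ solve $\dot y_k=v_k(Q(y))$, $k\in\mathcal{N}$, let $x(t)=Q(y(t))$, and let $p_k,p_k'\in\mathcal{X}_k$ with $p_k\preccurlyeq p_k'$. Then either $p_k$ becomes extinct along $x(t)$ (i.e. $\min\{x_{k\alpha}(t):\alpha\in\operatorname{supp}(p_k)\}\to0$), or every $\alpha_{-k}\in\mathcal{A}_{-k}\equiv\prod_{\ell\neq k}\mathcal{A}_\ell$ such that $u_k(p_k;\alpha_{-k})<u_k(p_k';\alpha_{-k})$ becomes extinct along $x(t)$ (i.e. $\prod_{\ell\ne k}x_{\ell,\alpha_\ell}(t)\to0$); the two alternatives are not mutually exclusive.
   Context: Setting: finite game with players $\mathcal{N}$, action sets $\mathcal{A}_k$, mixed strategies $\mathcal{X}_k=\Delta(\mathcal{A}_k)$, multilinear expected payoffs $u_k$, payoff vectors $v_k(x)=(u_k(\alpha;x_{-k}))_{\alpha\in\mathcal{A}_k}$. Each player has a penalty function $h_k$ on $\mathcal{X}_k$ (continuous, $C^\infty$ on relative interiors of faces, strongly convex: $h(tx_1+(1-t)x_2)\le th(x_1)+(1-t)h(x_2)-\tfrac12Kt(1-t)\|x_1-x_2\|^2$, $K>0$), with choice map $Q_k(y_k)=\arg\max_{x_k\in\mathcal{X}_k}\{\langle y_k,x_k\rangle-h_k(x_k)\}$; $Q=(Q_k)_k$. $p_k\preccurlyeq p_k'$ (weak domination) means $u_k(p_k;x_{-k})\le u_k(p_k';x_{-k})$ for all $x_{-k}\in\prod_{\ell\ne k}\mathcal{X}_\ell$,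 with strict inequality for some but not all $x_{-k}$. *)

(* Defs.v *)
From HB Require Import structures.
From mathcomp Require Import all_boot all_order all_algebra.
From mathcomp Require Import all_classical all_reals all_analysis.
Set Implicit Arguments. Unset Strict Implicit. Unset Printing Implicit Defensive.
Import Order.TTheory GRing.Theory Num.Theory.
Import numFieldNormedType.Exports.
Local Open Scope classical_set_scope.
Local Open Scope ring_scope.

(* A mixed strategy of player k
   is a row vector in 'rV[R]_(n k) (entry [x 0 a] = probability of a). *)

Section Game.
Variable R : realType.
Variable I : finType.
Variable n : I -> nat.

Definition pprofile := {dffun forall l : I, 'I_(n l)}.
Definition mprofile := forall l : I, 'rV[R]_(n l).

Definition simplex (m : nat) : set 'rV[R]_m :=
  [set x | (forall a, 0 <= x 0 a) /\ \sum_(a < m) x 0 a = 1].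

Definition dotv (m : nat) (y z : 'rV[R]_m) : R := \sum_(a < m) y 0 a * z 0 a.

(* u_k(p_k ; x_{-k}): multilinear expected payoff of player k when k plays
   p and the others play x_{-k} (the k-th component of x is ignored). *)
Definition udev (u : forall k : I, pprofile -> R) (k : I)
   (p : 'rV[R]_(n k)) (x : mprofile) : R :=
  \sum_(al : pprofile) p 0 (al k) * (\prod_(l | l != k) x l 0 (al l)) * u k al.

Definition upay (u : forall k : I, pprofile -> R) (k : I) (x : mprofile) : R :=
  udev u (x k) x.

Definition vertex (m : nat) (a : 'I_m) : 'rV[R]_m := \row_(b < m) (b == a)%:R.

Definition payvec (u : forall k : I, pprofile -> R) (k : I) (x : mprofile)
  : 'rV[R]_(n k) := \row_(a < n k) udev u (vertex a) x.

Definition pure (al : pprofile) : mprofile := fun l => vertex (al l).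

Definition wdominated (u : forall k : I, pprofile -> R) (k : I)
   (p p' : 'rV[R]_(n k)) : Prop :=
  [/\ (forall x : mprofile, (forall l, l != k -> simplex (x l)) ->
         udev u p x <= udev u p' x),
      (exists x : mprofile, (forall l, l != k -> simplex (x l)) /\
         udev u p x < udev u p' x)
    & ~ (forall x : mprofile, (forall l, l != k -> simplex (x l)) ->
         udev u p x < udev u p' x)].

(* x is a maximiser of <y, .> - h over the simplex, i.e. x \in Q(y) *)
Definition choice_of (m : nat) (h : 'rV[R]_m -> R) (y x : 'rV[R]_m) : Prop :=
  simplex x /\ forall z, simplex z -> dotv y z - h z <= dotv y x - h x.

Definition strongly_convex_on_simplex (m : nat) (h : 'rV[R]_m -> R) (K : R) :=
  forall x1 x2, simplex x1 -> simplex x2 -> forall t : R, 0 <= t <= 1 ->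
    h (t *: x1 + (1 - t) *: x2) <=
      t * h x1 + (1 - t) * h x2 - 2^-1 * K * t * (1 - t) * `|x1 - x2| ^+ 2.

Definition relint_face (m : nat) (S : {set 'I_m}) : set 'rV[R]_m :=
  [set x | simplex x /\ forall a, (x 0 a != 0) = (a \in S)].

Definition tangent_face (m : nat) (S : {set 'I_m}) (v : 'rV[R]_m) : Prop :=
  (forall a, a \notin S -> v 0 a = 0) /\ \sum_(a < m) v 0 a = 0.

Fixpoint iter_deriv (m : nat) (vs : seq 'rV[R]_m) (f : 'rV[R]_m -> R)
  : 'rV[R]_m -> R :=
  match vs with
  | [::] => f
  | v :: vs' => fun x => 'D_v (iter_deriv vs' f) x
  end.

Definition smooth_on_faces (m : nat) (h : 'rV[R]_m -> R) : Prop :=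
  forall (S : {set 'I_m}) (vs : seq 'rV[R]_m),
    (forall w, w \in vs -> tangent_face S w) ->
    {within relint_face S, continuous (iter_deriv vs h)} /\
    (forall x v, relint_face S x -> tangent_face S v ->
        derivable (iter_deriv vs h) x v).

Definition penalty (m : nat) (h : 'rV[R]_m -> R) : Prop :=
  [/\ {within simplex (m:=m), continuous h},
      smooth_on_faces h
    & exists2 K : R, 0 < K & strongly_convex_on_simplex h K].

End Game.

(* Main.v *)
Require Import Defs.
From HB Require Import structures.
From mathcomp Require Import all_boot all_order all_algebra.
From mathcomp Require Import all_classical all_reals all_analysis.
Import Order.TTheory GRing.Theory Num.Theory.
Import numFieldNormedType.Exports.
Local Open Scope classical_set_scope.
Local Open Scope ring_scope.

From mathcomp Require Import ring lra.

Module M_A.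
Set Implicit Arguments. Unset Strict Implicit.

Lemma sum_dffun_prod (R : comRingType) (I : finType) (T_ : I -> finType)
  (F : forall i, T_ i -> R) :
  \sum_(f : {dffun forall i, T_ i}) \prod_i F i (f i) = \prod_i \sum_(j : T_ i) F i j.
Proof.
pose P_ := fun i => [ffun j : T_ i => F i j].
transitivity (\sum_(t : fprod T_) \prod_(i in I) P_ i (t i)).
  rewrite (reindex (@dffun_of_fprod _ T_)); last first.
    by apply/onW_bij; exact: dffun_of_fprod_bij.
  apply: eq_bigr => t _; apply: eq_bigr => i _; by rewrite /P_ /dffun_of_fprod !ffunE.
rewrite (@big_fprod R 0 1 *%R +%R I T_ P_).
rewrite -(bigA_distr_big_dep (tagged_with T_) (fun i j => untag 0 (P_ i) j)).
apply: eq_bigr => i _.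
transitivity (\sum_(j : T_ i) P_ i j).
  by symmetry; exact: (@big_tag R 0 +%R I T_ (fun i => P_ i) i).
by apply: eq_bigr => j _; rewrite /P_ ffunE.
Qed.

End M_A.
Import M_A.

Module M_B.
Set Implicit Arguments. Unset Strict Implicit.

Lemma sum_delta (R : comRingType) (T : finType) (f : T -> R) (c : T) :
  \sum_j f j * (c == j)%:R = f c.
Proof.
rewrite (bigD1 c) //= eqxx mulr1 big1 ?addr0 // => j /negbTE jc.
by rewrite eq_sym jc mulr0.
Qed.

Section G.
Variables (R : realType) (I : finType) (n : I -> nat) (u : forall k : I, pprofile n -> R) (k : I).

Lemma vertexE m (a b : 'I_m) : (vertex R a) 0 b = (b == a)%:R.
Proof. by rewrite mxE. Qed.

Lemma udev_sub (p p' : 'rV[R]_(n k)) x :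
  udev u (p' - p) x = udev u p' x - udev u p x.
Proof.
rewrite /udev -sumrB; apply: eq_bigr => al _; rewrite !mxE; ring.
Qed.

Lemma pay_dot (d : 'rV[R]_(n k)) x :
  \sum_a payvec u k x 0 a * d 0 a = udev u d x.
Proof.
rewrite /payvec /udev.
under eq_bigr do rewrite mxE /udev big_distrl /=.
rewrite exchange_big /=; apply: eq_bigr => al _.
under eq_bigr do rewrite vertexE.
rewrite -(sum_delta (fun a => d 0 a * (\prod_(l | l != k) x l 0 (al l)) * u k al) (al k)).
by apply: eq_bigr => a _; rewrite eq_sym; ring.
Qed.

Lemma udev_decomp (d : 'rV[R]_(n k)) (x : mprofile R n) (al0 : pprofile n) :
  udev u d x = \sum_(al : pprofile n) (al k == al0 k)%:R * (\prod_(l | l != k) x l 0 (al l))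
                  * udev u d (pure R al).
Proof.
rewrite /udev.
under [RHS]eq_bigr do rewrite big_distrr /=.
rewrite [RHS]exchange_big /=; apply: eq_bigr => al' _.
pose G := fun l (j : 'I_(n l)) =>
  if l == k then (j == al0 l)%:R else x l 0 j * (al' l == j)%:R.
have HG : forall al : pprofile n, \prod_l G l (al l) =
   (al k == al0 k)%:R * (\prod_(l | l != k) x l 0 (al l)) *
     \prod_(l | l != k) (vertex R (al l)) 0 (al' l).
  move=> al; rewrite (bigD1 k) //= /G eqxx -mulrA; congr (_ * _).
  rewrite -big_split /=; apply: eq_bigr => l /negbTE ->.
  by rewrite vertexE eq_sym.
transitivity (d 0 (al' k) * u k al' * \sum_(al : pprofile n) \prod_l G l (al l)).
  rewrite sum_dffun_prod [in RHS](bigD1 k) //= /G eqxx.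
  rewrite (eq_bigr (fun j => (fun j => 1) j * (al0 k == j)%:R)); last first.
    by move=> j _; rewrite mul1r eq_sym.
  rewrite sum_delta mul1r.
  rewrite [X in _ = _ * X](eq_bigr (fun l => x l 0 (al' l))); first ring.
  by move=> l /negbTE ->; rewrite sum_delta.
rewrite big_distrr /=; apply: eq_bigr => al _; rewrite HG; ring.
Qed.

End G.

End M_B.
Import M_B.

Module M_C.
Set Implicit Arguments. Unset Strict Implicit.

Section C.
Variable R : realType.

Lemma is_derive_entry m (M : R -> 'rV[R]_m) t dM a :
  is_derive t (1:R) M dM -> is_derive t (1:R) (fun s => M s 0 a) (dM 0 a).
Proof.
move=> H.
have dM' : derivable M t 1 by case: H.
have dv : 'D_1 M t = dM by exact: derive_val.
have da : derivable (fun s => M s 0 a) t 1 by move/derivable_mxP : dM'; apply.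
apply: DeriveDef => //.
by rewrite -dv derive_mx // mxE.
Qed.

Lemma mvt_pos (f df : R -> R) (a b : R) : 0 < a -> a <= b ->
  (forall t : R, 0 < t -> is_derive t (1:R) f (df t)) ->
  exists2 c, a <= c <= b & f b - f a = df c * (b - a).
Proof.
move=> a0 ab H.
have [c cin ->] : exists2 c, c \in `[a, b]%R & f b - f a = df c * (b - a).
  apply: MVT_segment => //.
    move=> x; rewrite in_itv /= => /andP[ax _]; apply: H; exact: lt_trans a0 ax.
  apply: continuous_in_subspaceT => x.
  rewrite inE /= in_itv /= => /andP[ax _].
  have x0 : 0 < x by exact: lt_le_trans a0 ax.
  have [dfx _] := H x x0.
  exact/differentiable_continuous/derivable1_diffP.
by exists c => //; move: cin; rewrite in_itv.
Qed.
End C.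

Section C2.
Variable R : realType.
Lemma is_derive_dot m (Y : R -> 'rV[R]_m) (t : R) dY (d : 'rV[R]_m) :
  is_derive t (1:R) Y dY ->
  is_derive t (1:R) (fun s => dotv (Y s) d) (\sum_a dY 0 a * d 0 a).
Proof.
move=> H.
have -> : (fun s => dotv (Y s) d) = \sum_(a < m) (fun s => d 0 a *: Y s 0 a).
  apply/funext => s; rewrite /dotv fct_sumE; apply: eq_bigr => a _.
  by rewrite /= mulrC.
have -> : \sum_a dY 0 a * d 0 a = \sum_(a < m) d 0 a *: dY 0 a.
  by apply: eq_bigr => a _; rewrite /= mulrC.
apply: is_derive_sum => a.
have Ha := is_derive_entry a H.
exact: is_deriveZ.
Qed.
End C2.

End M_C.
Import M_C.

Module M_D.
Set Implicit Arguments. Unset Strict Implicit.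

Section D.
Variable R : realType.

Lemma entry_le_norm m (M : 'rV[R]_m) a : `|M 0 a| <= `|M|.
Proof.
rewrite [leRHS]/Num.Def.normr/= mx_normrE.
apply: le_trans; last exact: (le_bigmax _ _ (0, a)).
by [].
Qed.

Lemma dotv_comb m (y x1 x2 : 'rV[R]_m) (s t : R) :
  dotv y (s *: x1 + t *: x2) = s * dotv y x1 + t * dotv y x2.
Proof.
rewrite /dotv !big_distrr -big_split /=; apply: eq_bigr => a _.
rewrite !mxE; ring.
Qed.

Lemma simplex_comb m (x1 x2 : 'rV[R]_m) (t : R) : 0 <= t <= 1 ->
  simplex x1 -> simplex x2 -> simplex (t *: x1 + (1 - t) *: x2).
Proof.
move=> /andP[t0 t1] [p1 s1] [p2 s2]; split.
  move=> a; rewrite !mxE; apply: addr_ge0; apply: mulr_ge0 => //; lra.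
under eq_bigr do rewrite !mxE.
by rewrite big_split /= -!big_distrr /= s1 s2; ring.
Qed.

Lemma choice_lip m (h : 'rV[R]_m -> R) K (y1 y2 x1 x2 : 'rV[R]_m) (D : R) :
  0 < K -> strongly_convex_on_simplex h K ->
  choice_of h y1 x1 -> choice_of h y2 x2 ->
  (forall a, `|y1 0 a - y2 0 a| <= D) ->
  forall a, `|x1 0 a - x2 0 a| <= 2 * m%:R * D / K.
Proof.
move=> K0 sc [sx1 o1] [sx2 o2] HD a.
set N := `|x1 - x2|.
have N0 : 0 <= N by exact: normr_ge0.
have hw := sc x1 x2 sx1 sx2 (2^-1) ltac:(apply/andP; split; lra).
have sw := simplex_comb (t:=2^-1) ltac:(apply/andP; split; lra) sx1 sx2.
have A1 := o1 _ sw. have A2 := o2 _ sw.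
have B1 := o1 _ sx2. have B2 := o2 _ sx1.
rewrite !dotv_comb in A1 A2.
have key : K / 2 * N ^+ 2 <= dotv y1 x1 - dotv y1 x2 - dotv y2 x1 + dotv y2 x2.
  rewrite -/N in hw; nra.
have dotb : dotv y1 x1 - dotv y1 x2 - dotv y2 x1 + dotv y2 x2 <= m%:R * D * N.
  have -> : dotv y1 x1 - dotv y1 x2 - dotv y2 x1 + dotv y2 x2 =
     \sum_b (y1 0 b - y2 0 b) * (x1 0 b - x2 0 b).
    rewrite /dotv -!sumrB -big_split /=; apply: eq_bigr => b _; ring.
  have -> : m%:R * D * N = \sum_(b < m) D * N.
    by rewrite sumr_const card_ord -mulr_natl; ring.
  apply: ler_sum => b _.
  apply: le_trans (ler_norm _) _; rewrite normrM.
  apply: ler_pM => //.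
  have := entry_le_norm (x1 - x2) b; rewrite !mxE.
  by [].
have D0 : 0 <= D by apply: le_trans (HD a).
have := entry_le_norm (x1 - x2) a; rewrite !mxE -/N => eN.
apply: le_trans eN _.
rewrite ler_pdivlMr //.
have [->|Npos] := eqVneq N 0; first by rewrite mul0r; apply: mulr_ge0 => //; apply: mulr_ge0.
have Np : 0 < N by rewrite lt_def Npos N0.
nra.
Qed.
End D.

End M_D.
Import M_D.

Module M_E.
Set Implicit Arguments. Unset Strict Implicit.

Section E.
Variable R : realType.

Lemma simplex_entry_le1 m (x : 'rV[R]_m) a : simplex x -> 0 <= x 0 a <= 1.
Proof.
move=> [p s]; rewrite p /= -s (bigD1 a) //= lerDl.
by apply: sumr_ge0 => b _.
Qed.

Lemma simplex_closed m : closed (simplex (R:=R) (m:=m)).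
Proof.
have -> : simplex (R:=R) (m:=m) =
   (\bigcap_(a in [set: 'I_m]) ((fun M : 'rV[R]_m => M 0 a) @^-1` [set r | 0 <= r]))
   `&` ((fun M : 'rV[R]_m => \sum_a M 0 a) @^-1` [set r | r = 1]).
  apply/seteqP; split => x /=.
    by move=> [p s]; split => // a _; exact: p.
  by move=> [p s]; split => // a; exact: p.
apply: closedI.
  apply: closed_bigI => a _; apply: preimage_closed; last exact: closed_ge.
  by move=> M _; exact: coord_continuous.
apply: preimage_closed; last exact: closed_eq.
move=> M _.
have -> : (fun M : 'rV[R]_m => \sum_a M 0 a) = \sum_a (fun M : 'rV[R]_m => M 0 a).
  by apply/funext => N; rewrite fct_sumE.
elim/big_ind : _ => [|f g cf cg|a _].
- exact: cst_continuous.
- exact: continuousD.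
- exact: coord_continuous.
Qed.

Lemma simplex_bounded m : bounded_set (simplex (R:=R) (m:=m)).
Proof.
exists 1; split; first by rewrite realE ler01.
move=> M M1 x sx.
rewrite /Num.Def.normr /= mx_normrE; apply: bigmax_le => [|[i j] _].
  by apply: ltW; apply: lt_trans M1.
rewrite /= (ord1 i).
have := simplex_entry_le1 j sx.
move=> /andP[x0 x1]; rewrite ger0_norm //; lra.
Qed.

Lemma penalty_bounded m (h : 'rV[R]_m -> R) : penalty h ->
  exists B : R, forall z, simplex z -> `|h z| <= B.
Proof.
move=> [hc _ _].
have cpt : compact (h @` simplex (R:=R) (m:=m)).
  apply: continuous_compact => //.
  apply: (@bounded_closed_compact R m _ (simplex_bounded m)); exact: simplex_closed.
have [M [Mreal HM]] := compact_bounded cpt.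
exists (M + 1) => z sz; apply: (HM (M + 1)); first by rewrite ltrDl.
by exists z.
Qed.
End E.

End M_E.
Import M_E.

Module M_F.
Set Implicit Arguments. Unset Strict Implicit.

Section F.
Variable R : realType.

Lemma prod01 (T : finType) (P : pred T) (f : T -> R) :
  (forall i, 0 <= f i <= 1) -> 0 <= \prod_(i | P i) f i <= 1.
Proof.
move=> H; elim/big_ind : _ => [|a b /andP[a0 a1] /andP[b0 b1]|i _]; last exact: H.
  by rewrite ler01 lexx.
apply/andP; split; nra.
Qed.

Lemma prod_lip (T : finType) (P : pred T) (f g : T -> R) :
  (forall i, 0 <= f i <= 1) -> (forall i, 0 <= g i <= 1) ->
  `|\prod_(i | P i) f i - \prod_(i | P i) g i| <= \sum_(i | P i) `|f i - g i|.
Proof.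
move=> Hf Hg.
pose K := fun y1 y2 y3 : R => [/\ 0 <= y1 <= 1, 0 <= y2 <= 1 & `|y1 - y2| <= y3].
suff : K (\prod_(i | P i) f i) (\prod_(i | P i) g i) (\sum_(i | P i) `|f i - g i|) by case.
apply: (big_rec3 K); first by split; rewrite ?ler01 ?lexx // subrr normr0.
move=> i y1 y2 y3 _ [/andP[a0 a1] /andP[b0 b1] c].
have /andP[f0 f1] := Hf i; have /andP[g0 g1] := Hg i.
split; try (apply/andP; split; nra).
have -> : f i * y1 - g i * y2 = f i * (y1 - y2) + (f i - g i) * y2 by ring.
apply: le_trans (ler_normD _ _) _.
rewrite addrC normrM [`|f i * _|]normrM (ger0_norm f0) (ger0_norm b0).
apply: lerD.
  by rewrite -[leRHS]mulr1 ler_wpM2l.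
apply: le_trans c; rewrite -[leRHS]mul1r; apply: ler_wpM2r => //.
Qed.

Lemma vertex_simplex m (a : 'I_m) : simplex (vertex R a).
Proof.
split; first by move=> b; rewrite vertexE ler0n.
under eq_bigr do rewrite vertexE.
by rewrite (bigD1 a) //= eqxx big1 ?addr0 // => b /negbTE ->.
Qed.

End F.

End M_F.
Import M_F.


Theorem proposition4p3 (R : realType) (I : finType) (n : I -> nat)
  (u : forall k : I, pprofile n -> R)
  (h : forall k : I, 'rV[R]_(n k) -> R)
  (y x : R -> mprofile R n)
  (k : I) (p p' : 'rV[R]_(n k)) :
  (forall l : I, penalty (h l)) ->
  (forall t : R, forall l : I, choice_of (h l) (y t l) (x t l)) ->
  (forall t : R, 0 < t -> forall l : I,
      is_derive t 1 (fun s => y s l) (payvec u l (x t))) ->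
  simplex p -> simplex p' ->
  wdominated u p p' ->
  ((fun t => \big[Num.min/1]_(a < n k | p 0 a != 0) x t k 0 a) @ +oo --> 0)
  \/
  (forall al : pprofile n,
     udev u p (pure R al) < udev u p' (pure R al) ->
     (fun t => \prod_(l | l != k) x t l 0 (al l)) @ +oo --> 0).
Proof.
move=> hpen hch hder sp sp' wd.
set d := p' - p.
pose Dl t := dotv (y t k) d.
pose g (al : pprofile n) := udev u d (pure R al).
have gge0 : forall al, 0 <= g al.
  move=> al; rewrite /g /d udev_sub subr_ge0.
  case: wd => H _ _; apply: H => l _; exact: vertex_simplex.
have xsim : forall t l, simplex (x t l) by move=> t l; case: (hch t l).
have x01 : forall t l a, 0 <= x t l 0 a <= 1.
  by move=> t l a; exact: simplex_entry_le1.
have x0 : forall t l a, 0 <= x t l 0 a by move=> t l a; case/andP: (x01 t l a).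
have dDl : forall t : R, 0 < t -> is_derive t (1:R) Dl (udev u d (x t)).
  move=> t t0; rewrite -pay_dot; exact: is_derive_dot (hder t t0 k).
have termge0 : forall (t : R) (al0 al : pprofile n),
   0 <= (al k == al0 k)%:R * (\prod_(l | l != k) x t l 0 (al l)) * g al.
  move=> t al0 al; apply: mulr_ge0 => //; apply: mulr_ge0 => //.
  exact: prodr_ge0.
have dlow : forall (t : R) (al0 : pprofile n), (\prod_(l | l != k) x t l 0 (al0 l)) * g al0 <= udev u d (x t).
  move=> t al0; rewrite (udev_decomp u d (x t) al0) (bigD1 al0) //= eqxx mul1r.
  by rewrite lerDl; apply: sumr_ge0 => al _; exact: termge0.
have dge0 : forall t : R, 0 <= udev u d (x t).
  move=> t; case: (pickP (fun _ : pprofile n => true)) => [al0 _|none].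
    apply: le_trans (dlow t al0); apply: mulr_ge0 => //; exact: prodr_ge0.
  by rewrite /udev big_pred0.
have mono : forall s t : R, 0 < s -> s <= t -> Dl s <= Dl t.
  move=> s t s0 st.
  have [c /andP[sc ct] E] := mvt_pos s0 st dDl.
  by rewrite -subr_ge0 E; apply: mulr_ge0 => //; rewrite subr_ge0.
have [B HB] := penalty_bounded (hpen k).
pose mu t := \big[Num.min/1]_(a < n k | p 0 a != 0) x t k 0 a.
have mu0 : forall t : R, 0 <= mu t.
  by move=> t; apply: le_bigmin => //; exact: ler01.
have mu1 : forall t : R, mu t <= 1 by move=> t; exact: bigmin_le_id.
have muex : forall t : R, mu t * Dl t <= 2 * B.
  move=> t.
  have mle : forall a, p 0 a != 0 -> mu t <= x t k 0 a.
    by move=> a pa; exact: bigmin_le_cond.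
  set z := 1 *: x t k + mu t *: d.
  have sz : simplex z.
    split.
      move=> a; rewrite /z /d !mxE.
      have := x0 t k a; have := mu0 t; have [sp0 _] := sp; have [sp0' _] := sp'.
      have := sp0 a; have := sp0' a; have := simplex_entry_le1 a sp.
      case: (eqVneq (p 0 a) 0) => [->|/mle]; nra.
    rewrite /z /d; under eq_bigr do rewrite !mxE.
    under eq_bigr do rewrite mul1r.
    rewrite big_split /= -big_distrr /= sumrB (proj2 sp) (proj2 sp') (proj2 (xsim t k)).
    by rewrite subrr mulr0 addr0.
  have := (hch t k).2 z sz; rewrite /z dotv_comb.
  have := HB z sz; have := HB _ (xsim t k).
  rewrite /Dl -/z !ler_norml => /andP[h1 h2] /andP[h3 h4]; lra.
case: (pselect (forall al : pprofile n, udev u p (pure R al) < udev u p' (pure R al) ->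
     (fun t => \prod_(l | l != k) x t l 0 (al l)) @ +oo --> 0)) => [H|H]; first by right.
left.
move/existsNP: H => [al0 /not_implyP [hlt hnc]].
pose P t := \prod_(l | l != k) x t l 0 (al0 l).
have g0 : 0 < g al0 by rewrite /g /d udev_sub subr_gt0.
have P01 : forall t : R, 0 <= P t <= 1 by move=> t; apply: prod01 => l; exact: x01.
have [e e0 He] : exists2 e : R, 0 < e & forall T : R, exists t, T < t /\ e <= P t.
  apply: contra_notP hnc => Hn.
  apply/cvgrPdist_lt => e e0.
  have : ~ (forall T : R, exists t, T < t /\ e <= P t) by move=> Hc; apply: Hn; exists e.
  move/existsNP => [T HT].
  exists T; split; first exact: num_real.
  move=> t Tt; rewrite sub0r normrN ger0_norm; last by case/andP: (P01 t).
  rewrite ltNge; apply/negP => et; apply: HT; exists t; split => //.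
have Kex : forall l, exists K : R, 0 < K /\ strongly_convex_on_simplex (h l) K.
  by move=> l; case: (hpen l) => _ _ [K K0 sc]; exists K.
have [Kf HK] := choice Kex.
pose U l := \sum_(al : pprofile n) `|u l al|.
have U0 : forall l, 0 <= U l by move=> l; apply: sumr_ge0.
have payb : forall (t : R) l a, `|payvec u l (x t) 0 a| <= U l.
  move=> t l a; rewrite mxE /udev; apply: le_trans (ler_norm_sum _ _ _) _.
  apply: ler_sum => al _; rewrite !normrM.
  have v01 : `|vertex R a 0 (al l)| <= 1.
    by rewrite vertexE; case: eqP; rewrite ?normr1 ?normr0 ?ler01.
  have pb : `|\prod_(l' | l' != l) x t l' 0 (al l')| <= 1.
    have /andP[q0 q1] := prod01 (fun l' => l' != l) (fun l' => x01 t l' (al l')).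
    by rewrite ger0_norm.
  rewrite -[leRHS]mul1r; apply: ler_wpM2r => //.
  by rewrite -[leRHS]mulr1; apply: ler_pM.
have ylip : forall (s t : R) l a, 1 <= s -> s <= t ->
    `|y t l 0 a - y s l 0 a| <= U l * (t - s).
  move=> s t l a s1 st.
  have s0 : 0 < s by apply: lt_le_trans s1.
  have [c /andP[sc ct] E] := @mvt_pos R (fun r => y r l 0 a)
      (fun r => payvec u l (x r) 0 a) s t s0 st
      (fun r r0 => is_derive_entry a (hder r r0 l)).
  rewrite E normrM (ger0_norm (_ : 0 <= t - s)); last by rewrite subr_ge0.
  by apply: ler_wpM2r; [rewrite subr_ge0 | exact: payb].
have xlip : forall (s t : R) l a, 1 <= s -> s <= t ->
    `|x t l 0 a - x s l 0 a| <= 2 * (n l)%:R * (U l * (t - s)) / Kf l.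
  move=> s t l a s1 st; have [K0 sc] := HK l.
  apply: (choice_lip K0 sc (hch t l) (hch s l)) => b; exact: ylip.
pose L := \sum_l 2 * (n l)%:R * U l / Kf l.
have Lt0 : forall l, 0 <= 2 * (n l)%:R * U l / Kf l.
  move=> l; have [K0 _] := HK l.
  by apply: divr_ge0; [apply: mulr_ge0 => //; apply: mulr_ge0 | apply: ltW].
have L0 : 0 <= L by apply: sumr_ge0.
have Plip : forall s t : R, 1 <= s -> s <= t -> `|P t - P s| <= L * (t - s).
  move=> s t s1 st.
  apply: le_trans (prod_lip _ _ _) _; try (move=> l; exact: x01).
  rewrite /L big_distrl /=.
  apply: le_trans (_ : \sum_(l | l != k) 2 * (n l)%:R * U l / Kf l * (t - s) <= _).
    apply: ler_sum => l _; apply: le_trans (xlip s t l _ s1 st) _.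
    by rewrite !mulrA mulrAC.
  rewrite [leRHS](bigID (fun l => l != k)) /= lerDl.
  by apply: sumr_ge0 => l _; apply: mulr_ge0 => //; rewrite subr_ge0.
pose del := e / (2 * (L + 1)).
have del0 : 0 < del by apply: divr_gt0 => //; apply: mulr_gt0 => //; lra.
have delE : (L + 1) * del = e / 2.
  rewrite /del; field; lra.
have Ldel : L * del <= e / 2 by rewrite -delE; nra.
pose c0 := e / 2 * g al0 * del.
have c00 : 0 < c0 by apply: mulr_gt0 => //; apply: mulr_gt0 => //; lra.
have grow : forall t0 : R, 1 <= t0 -> e <= P t0 -> Dl t0 + c0 <= Dl (t0 + del).
  move=> t0 t1 et.
  have t00 : 0 < t0 by apply: lt_le_trans t1.
  have [c /andP[tc ct] E] := mvt_pos t00 (ltW (ltr_pwDr del0 (lexx t0))) dDl.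
  have Pc : e / 2 <= P c.
    have := Plip t0 c t1 tc; rewrite ler_norml => /andP[h1 _].
    have : L * (c - t0) <= L * del by apply: ler_wpM2l => //; lra.
    lra.
  have := dlow c al0; rewrite -/(P c) => dl.
  have : e / 2 * g al0 <= udev u d (x c) by apply: le_trans dl; apply: ler_wpM2r => //; exact: ltW.
  move=> H1.
  have : e / 2 * g al0 * del <= udev u d (x c) * del by apply: ler_wpM2r => //; exact: ltW.
  rewrite -/c0; move: E; rewrite addrAC subrr add0r => E.
  lra.
have unb : forall N : nat, exists T : R, 1 <= T /\ Dl 1 + N%:R * c0 <= Dl T.
  elim => [|N [T [T1 HT]]]; first by exists 1; rewrite mul0r addr0.
  have [t0 [Tt0 et0]] := He T.
  exists (t0 + del); split; first lra.
  have m1 := mono T t0 ltac:(lra) (ltW Tt0).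
  have := grow t0 ltac:(lra) et0.
  rewrite -natr1 mulrDl mul1r; lra.
have B0 : 0 <= B by apply: le_trans (HB p sp).
apply/cvgrPdist_lt => eta eta0.
set X := (2 * B / eta - Dl 1) / c0.
have [N HN] : exists N : nat, X < N%:R.
  exists (Num.bound `|X|); apply: le_lt_trans (ler_norm X) _.
  exact: archi_boundP.
have Veta : 2 * B / eta * eta = 2 * B by rewrite divfK // gt_eqF.
have HN' : 2 * B / eta - Dl 1 < N%:R * c0 by rewrite -ltr_pdivrMr.
have [T [T1 HT]] := unb N.
exists T; split; first exact: num_real.
move=> t Tt; rewrite sub0r normrN ger0_norm ?mu0 //.
have DT : Dl T <= Dl t := mono T t ltac:(lra) (ltW Tt).
have := muex t; have := mu0 t.
have V0 : 0 <= 2 * B / eta by apply: divr_ge0 => //; [lra | exact: ltW].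
rewrite -/(mu t).
nra.
Qed.
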